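(* Let $\mathfrak{g}$ be a $6$-dimensional real nilpotent Lie algebra with a complex structure $J$. Then $\mathfrak{g}^*$ has a basis $\{e^1,\dots,e^6\}$ such that $e^1+ie^2$ is a closed $(1,0)$-form (i.e. $d(e^1+ie^2)=0$ and $e^1+ie^2\in\Lambda^{1,0}$) and $de^3\in\langle e^{12}\rangle$, $de^4\in\langle e^{12},e^{13},e^{23}\rangle$, $de^5\in\langle e^{12},e^{13},e^{14},e^{23},e^{24},e^{34}\rangle$, $de^6\in\langle e^{12},e^{13},e^{14},e^{15},e^{23},e^{24},e^{25},e^{34}\rangle$.
   Context: A complex structure is a linear $J\colon\mathfrak{g}\to\mathfrak{g}$ with $J^2=-1$ and $[JX,JY]=[X,Y]+J[JX,Y]+J[X,JY]$ for all $X,Y$. $d\alpha(X,Y)=-\alpha([X,Y])$, extended complex-linearly; $\Lambda^{1,0}$ is the space of complex-linear forms $\omega$ on $\mathfrak{g}$ with $\omega(JX)=i\,\omega(X)$. $e^{ij}=e^i\wedge e^j$. *)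

(* Defs.v *)
From HB Require Import structures.
From mathcomp Require Import all_boot all_order all_algebra.
From mathcomp Require Import Rstruct.
From mathcomp Require Import complex.
Set Implicit Arguments. Unset Strict Implicit. Unset Printing Implicit Defensive.
Import Order.TTheory GRing.Theory Num.Theory.
Local Open Scope ring_scope.

(* The underlying 6-dimensional real vector space of the Lie algebra g,
   identified with row vectors R^6 (every 6-dim real space is isomorphic to it). *)
Notation V := 'rV[Rdefinitions.R]_6.

Definition is_lie_bracket (br : V -> V -> V) : Prop :=
  [/\ (forall (a : Rdefinitions.R) x y z, br (a *: x + y) z = a *: br x z + br y z),
      (forall (a : Rdefinitions.R) x y z, br z (a *: x + y) = a *: br z x + br z y),
      (forall x, br x x = 0) &
      (forall x y z, br x (br y z) + br y (br z x) + br z (br x y) = 0)].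

Fixpoint iter_br (br : V -> V -> V) (xs : seq V) (y : V) : V :=
  if xs is x :: xs' then br x (iter_br br xs' y) else y.

(* Nilpotent: the lower central series terminates, i.e. for some k every
   bracket of length k+1 vanishes (the k-th term of the lower central series
   g^1 = g, g^{j+1} = [g, g^j] is spanned by such brackets). *)
Definition nilpotent_bracket (br : V -> V -> V) : Prop :=
  exists k : nat, forall (xs : seq V) (y : V), size xs = k -> iter_br br xs y = 0.

(* A complex structure J (acting on X as X *m J):
   J^2 = -1 and the integrability (Nijenhuis) condition. *)
Definition is_complex_structure (br : V -> V -> V) (J : 'M[Rdefinitions.R]_6) : Prop :=
  J *m J = - 1%:M /\
  forall X Y, br (X *m J) (Y *m J)
              = br X Y + (br (X *m J) Y) *m J + (br X (Y *m J)) *m J.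

(* The dual basis element e^k (k = 1..6) determined by the matrix E:
   e^k(X) = (X *m E)_{k}; the e^k form a basis of g^* iff E is invertible. *)
Definition ef (E : 'M[Rdefinitions.R]_6) (k : nat) (X : V) : Rdefinitions.R :=
  (X *m E) 0 (inord k.-1).

Definition d1 (br : V -> V -> V) (alpha : V -> Rdefinitions.R) (X Y : V) : Rdefinitions.R :=
  - alpha (br X Y).

Definition wedge (a b : V -> Rdefinitions.R) (X Y : V) : Rdefinitions.R :=
  a X * b Y - a Y * b X.

Definition in_span2 (E : 'M[Rdefinitions.R]_6) (S : seq (nat * nat))
  (w : V -> V -> Rdefinitions.R) : Prop :=
  exists c : nat * nat -> Rdefinitions.R, forall X Y,
    w X Y = \sum_(p <- S) c p * wedge (ef E p.1) (ef E p.2) X Y.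

Definition cform (a b : V -> Rdefinitions.R) (X : V) : Rdefinitions.R[i] :=
  Complex (a X) (b X).

Definition is_10_form (J : 'M[Rdefinitions.R]_6) (omega : V -> Rdefinitions.R[i]) : Prop :=
  forall X, omega (X *m J) = 'i * omega X.

Definition closed_cform (br : V -> V -> V) (omega : V -> Rdefinitions.R[i]) : Prop :=
  forall X Y, - omega (br X Y) = 0.

(* Main.v *)
Require Import Defs.
From HB Require Import structures.
From mathcomp Require Import all_boot all_order all_algebra.
From mathcomp Require Import Rstruct complex.
From mathcomp Require Import ring lra.
From Stdlib Require Import Classical.
Set Implicit Arguments. Unset Strict Implicit. Unset Printing Implicit Defensive.
Import GRing.Theory Num.Theory.
Local Open Scope ring_scope.


Notation RR := Rdefinitions.R.

Lemma br0l br : is_lie_bracket br -> forall z, br 0 z = 0.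
Proof.
case=> Hl _ _ _ z.
have := Hl 1 0 0 z; rewrite !scale1r addr0 => h.
by apply: (addrI (br 0 z)); rewrite addr0 -h.
Qed.

Lemma br0r br : is_lie_bracket br -> forall z, br z 0 = 0.
Proof.
case=> _ Hr _ _ z.
have := Hr 1 0 0 z; rewrite !scale1r addr0 => h.
by apply: (addrI (br z 0)); rewrite addr0 -h.
Qed.

Lemma brDl br : is_lie_bracket br -> forall x y z, br (x + y) z = br x z + br y z.
Proof. move=> H x y z; case: (H) => Hl _ _ _; by rewrite -[x]scale1r Hl !scale1r. Qed.

Lemma brDr br : is_lie_bracket br -> forall x y z, br z (x + y) = br z x + br z y.
Proof. move=> H x y z; case: (H) => _ Hr _ _; by rewrite -[x]scale1r Hr !scale1r. Qed.

Lemma brZl br : is_lie_bracket br -> forall (a : RR) x z, br (a *: x) z = a *: br x z.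
Proof. move=> H a x z; case: (H) => Hl _ _ _; by rewrite -[a *: x]addr0 Hl (br0l H) addr0. Qed.

Lemma brZr br : is_lie_bracket br -> forall (a : RR) x z, br z (a *: x) = a *: br z x.
Proof. move=> H a x z; case: (H) => _ Hr _ _; by rewrite -[a *: x]addr0 Hr (br0r H) addr0. Qed.

Lemma brN br : is_lie_bracket br -> forall x y, br x y = - br y x.
Proof.
move=> H x y; case: (H) => _ _ Ha _.
have := Ha (x + y); rewrite (brDl H) !(brDr H) !Ha add0r addr0 => /eqP.
by rewrite addr_eq0 => /eqP.
Qed.

Lemma brNl br : is_lie_bracket br -> forall x z, br (- x) z = - br x z.
Proof. by move=> H x z; rewrite -scaleN1r (brZl H) scaleN1r. Qed.
Lemma brNr br : is_lie_bracket br -> forall x z, br z (- x) = - br z x.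
Proof. by move=> H x z; rewrite -scaleN1r (brZr H) scaleN1r. Qed.

Lemma br_suml br (I : Type) (r : seq I) (P : pred I) (F : I -> V) z :
  is_lie_bracket br -> br (\sum_(i <- r | P i) F i) z = \sum_(i <- r | P i) br (F i) z.
Proof. move=> H; apply: (big_morph (fun x => br x z)); [exact: (fun x y => brDl H x y z) | exact: (br0l H z)]. Qed.

Lemma br_sumr br (I : Type) (r : seq I) (P : pred I) (F : I -> V) z :
  is_lie_bracket br -> br z (\sum_(i <- r | P i) F i) = \sum_(i <- r | P i) br z (F i).
Proof. move=> H; apply: (big_morph (fun x => br z x)); [exact: (fun x y => brDr H x y z) | exact: (br0r H z)]. Qed.

Lemma engel br (P Q : V -> Prop) :
  nilpotent_bracket br -> is_lie_bracket br ->
  (forall x y, P y -> P (br x y)) -> Q 0 -> (exists y, P y /\ ~ Q y) ->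
  exists w, [/\ P w, ~ Q w & forall x, Q (br x w)].
Proof.
move=> [N HN] Hb HP HQ0 [y0 [Py0 Qy0]].
apply: NNPP => Hno.
suff: forall m, exists xs, [/\ size xs = m, P (iter_br br xs y0) & ~ Q (iter_br br xs y0)].
  by case/(_ N) => xs [Hs _]; rewrite HN.
elim=> [|m [xs [Hs Pw Qw]]]; first by exists [::].
have : ~ (forall x, Q (br x (iter_br br xs y0))).
  by move=> Hall; apply: Hno; exists (iter_br br xs y0).
move/not_all_ex_not=> [x Hx].
by exists (x :: xs); split => //=; [rewrite Hs | apply: HP].
Qed.

Lemma indep2 (M : lmodType RR) (f : M -> M) :
  (forall x y, f (x + y) = f x + f y) -> (forall (a : RR) x, f (a *: x) = a *: f x) ->
  (forall x, f (f x) = - x) ->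
  forall v (a b : RR), v != 0 -> a *: v + b *: f v = 0 -> a = 0 /\ b = 0.
Proof.
move=> fD fZ ff v a b v0 H.
have H2 : a *: f v - b *: v = 0.
  have := congr1 f H; rewrite fD !fZ ff.
  have -> : f 0 = 0 by have := fZ 0 0; rewrite !scale0r.
  by rewrite scalerN.
have : (a * a + b * b) *: v = 0.
  have -> : (a * a + b * b) *: v = a *: (a *: v + b *: f v) - b *: (a *: f v - b *: v).
    by rewrite scalerDr scalerBr !scalerA scalerDl (mulrC b a) opprB addrCA addrK addrC.
  by rewrite H H2 !scaler0 subrr.
move/eqP; rewrite scaler_eq0 (negbTE v0) orbF => /eqP h.
move: h; rewrite -!expr2 => /eqP; rewrite paddr_eq0 ?sqr_ge0 // !sqrf_eq0.
by case/andP => /eqP -> /eqP ->.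
Qed.


Definition gen (br : V -> V -> V) k (t : (k.-tuple 'I_6 * 'I_6)%type) : V :=
  iter_br br (map (fun i => delta_mx 0 i) (tval t.1)) (delta_mx 0 t.2).

Definition Lmx (br : V -> V -> V) k : 'M[RR]_6 :=
  (\sum_(t : (k.-tuple 'I_6 * 'I_6)%type) <<gen br t>>)%MS.

Lemma Lmx0 br (y : V) : (y <= Lmx br 0)%MS.
Proof.
rewrite (row_sum_delta y); apply: summx_sub => j _; apply: scalemx_sub.
apply: (sumsmx_sup ([tuple], j)) => //; by rewrite genmxE /gen /=.
Qed.

Lemma Lkey br k x y : is_lie_bracket br ->
  (y <= Lmx br k)%MS -> (br x y <= Lmx br k.+1)%MS.
Proof.
move=> H /sub_sumsmxP [u ->]; rewrite br_sumr //; apply: summx_sub => t _.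
have : (u t *m <<gen br t>> <= gen br t)%MS by rewrite -(genmxE (gen br t)) submxMl.
case/sub_rVP => a ->; rewrite (brZr H); apply: scalemx_sub.
rewrite (row_sum_delta x) br_suml //; apply: summx_sub => i _; rewrite (brZl H).
apply: scalemx_sub; apply: (sumsmx_sup ([tuple of i :: tval t.1], t.2)) => //.
by rewrite genmxE /gen /=.
Qed.

Lemma LN br : is_lie_bracket br -> nilpotent_bracket br -> exists N, Lmx br N.+1 = 0.
Proof.
move=> H [N HN]; exists N; apply/eqP; rewrite -submx0; apply/sumsmx_subP => t _.
rewrite genmxE /gen; case: t => [[[|x xs] /= Hs] j] //.
rewrite HN; first by rewrite (br0r H) sub0mx.
by rewrite size_map; apply/eqP.
Qed.

Lemma L1gen br (m : nat) (T : 'M[RR]_(m, 6)) :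
  (forall x y, (br x y <= T)%MS) -> (Lmx br 1 <= T)%MS.
Proof.
move=> HT; apply/sumsmx_subP => t _; rewrite genmxE /gen.
by case: t => [[[|x [|? ?]] //= Hs] j].
Qed.

Definition Smx br (J : 'M[RR]_6) k := (Lmx br k + Lmx br k *m J)%MS.

Lemma SJ br J k m (A : 'M[RR]_(m, 6)) : J *m J = - 1%:M ->
  (A <= Smx br J k)%MS -> (A *m J <= Smx br J k)%MS.
Proof.
move=> HJ /sub_addsmxP [[u1 u2] /= ->].
rewrite mulmxDl; apply: addmx_sub.
  by rewrite -mulmxA; apply: submx_trans (addsmxSr _ _); apply: submxMl.
rewrite -!mulmxA HJ mulmxN mulmx1 mulmxN -scaleN1r. idtac. apply: scalemx_sub.
by apply: submx_trans (addsmxSl _ _); apply: submxMl.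
Qed.

Lemma Sstep br J k : is_lie_bracket br -> is_complex_structure br J ->
  (forall v : V, (v <= Smx br J k)%MS) -> forall x y, (br x y <= Smx br J k.+1)%MS.
Proof.
move=> H [HJ Hint] Hall x y.
have dec : forall v : V, exists A B, [/\ v = A + B *m J, (A <= Lmx br k)%MS & (B <= Lmx br k)%MS].
  move=> v; case/sub_addsmxP: (Hall v) => [[u1 u2] /= ->].
  by exists (u1 *m Lmx br k), (u2 *m Lmx br k); rewrite !submxMl mulmxA.
have inL : forall w : V, (w <= Lmx br k.+1)%MS -> (w <= Smx br J k.+1)%MS.
  by move=> w hw; apply: submx_trans hw (addsmxSl _ _).
have inLJ : forall w : V, (w <= Lmx br k.+1)%MS -> (w *m J <= Smx br J k.+1)%MS.
  by move=> w hw; apply: submx_trans (addsmxSr _ _); apply: submxMr.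
have opp : forall w : V, (w <= Smx br J k.+1)%MS -> (- w <= Smx br J k.+1)%MS.
  by move=> w hw; rewrite -scaleN1r; apply: scalemx_sub.
case: (dec x) => A [B [-> hA hB]]; case: (dec y) => C [D [-> hC hD]].
rewrite (brDl H); apply: addmx_sub.
  by rewrite (brN H); apply: opp; apply: inL; apply: (Lkey _ H hA).
rewrite (brDr H); apply: addmx_sub; first by apply: inL; apply: (Lkey _ H hC).
rewrite Hint; apply: addmx_sub; first (apply: addmx_sub; first by apply: inL; apply: (Lkey _ H hD)).
  by apply: inLJ; apply: (Lkey _ H hD).
by rewrite (brN H) mulNmx; apply: opp; apply: inLJ; apply: (Lkey _ H hB).
Qed.

Lemma exists_c br J : is_lie_bracket br -> nilpotent_bracket br -> is_complex_structure br J ->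
  exists c : 'cV[RR]_6, c != 0 /\ forall x y, br x y *m c = 0 /\ br x y *m J *m c = 0.
Proof.
move=> H Hn [HJ Hint].
have notfull : ~~ row_full (Smx br J 1).
  apply/negP => full.
  have claim : forall m (v : V), (v <= Smx br J m.+1)%MS.
    elim=> [|m IH] v; first by apply: submx_trans (submx1 v) _; rewrite sub1mx.
    have hS : (Smx br J 1 <= Smx br J m.+2)%MS.
      have hL : (Lmx br 1 <= Smx br J m.+2)%MS.
        by apply: L1gen => x y; apply: Sstep.
      rewrite addsmx_sub hL /=; exact: SJ.
    apply: submx_trans hS; apply: submx_trans (submx1 v) _; by rewrite sub1mx.
  case: (LN H Hn) => N HN.
  have := claim N (delta_mx 0 0); rewrite /Smx HN mul0mx addsmx0 submx0 => /eqP /matrixP /(_ 0 0).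
  by rewrite !mxE /= => /eqP; rewrite oner_eq0.
set S := Smx br J 1.
have hK : cokermx S != 0.
  by rewrite -mxrank_eq0 mxrank_coker subn_eq0 -ltnNge ltn_neqAle rank_leq_col andbT; exact: notfull.
have [j hj] : exists j, col j (cokermx S) != 0.
  apply: NNPP => hno; move/negP: hK => hK; apply: hK; apply/eqP/matrixP => i j.
  have : col j (cokermx S) == 0 by apply/negPn/negP => hc; apply: hno; exists j.
  by move/eqP/matrixP/(_ i 0); rewrite !mxE.
exists (col j (cokermx S)); split => // x y.
have hann : forall v : V, (v <= S)%MS -> v *m col j (cokermx S) = 0.
  move=> v /submxP [D ->]; by rewrite colE mulmxA -(mulmxA D S) mulmx_coker mulmx0 mul0mx.
have hb : (br x y <= Lmx br 1)%MS by apply: Lkey => //; apply: Lmx0.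
split; apply: hann; first by apply: submx_trans hb (addsmxSl _ _).
by apply: submx_trans (addsmxSr _ _); apply: submxMr.
Qed.


Lemma rank_inj m n (A : 'M[RR]_(m, n)) :
  (forall r : 'rV_m, r *m A = 0 -> r = 0) -> \rank A = m.
Proof.
move=> Hi.
have hk : kermx A = 0.
  apply/eqP; rewrite -submx0; apply/row_subP => i.
  have -> : row i (kermx A) = 0 by apply: Hi; apply/sub_kermxP; exact: row_sub.
  by rewrite sub0mx.
have := mxrank_ker A; rewrite hk mxrank0 => /esym /eqP; rewrite subn_eq0 => h.
by apply/eqP; rewrite eqn_leq h rank_leq_row.
Qed.

Lemma mul3 (a b d : RR) (x y z : V) :
  row_mx a%:M (row_mx b%:M d%:M) *m col_mx x (col_mx y z) = a *: x + b *: y + d *: z.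
Proof. by rewrite !mul_row_col !mul_scalar_mx addrA. Qed.

Lemma split3 (r : 'rV[RR]_(1 + (1 + 1))) : exists a b d, r = row_mx a%:M (row_mx b%:M d%:M).
Proof.
exists (lsubmx r 0 0), (lsubmx (rsubmx r) 0 0), (rsubmx (rsubmx r) 0 0).
by rewrite -!mx11_scalar !hsubmxK.
Qed.

Lemma mul4 (a b d e : RR) (x y z t : V) :
  row_mx a%:M (row_mx b%:M (row_mx d%:M e%:M)) *m col_mx x (col_mx y (col_mx z t))
  = a *: x + b *: y + d *: z + e *: t.
Proof. by rewrite !mul_row_col !mul_scalar_mx !addrA. Qed.

Lemma split4 (r : 'rV[RR]_(1 + (1 + (1 + 1)))) :
  exists a b d e, r = row_mx a%:M (row_mx b%:M (row_mx d%:M e%:M)).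
Proof.
exists (lsubmx r 0 0), (lsubmx (rsubmx r) 0 0), (lsubmx (rsubmx (rsubmx r)) 0 0),
  (rsubmx (rsubmx (rsubmx r)) 0 0).
by rewrite -!mx11_scalar !hsubmxK.
Qed.

Lemma m11 (A : 'M[RR]_1) : A = 0 <-> A 0 0 = 0.
Proof.
split=> [-> | h]; first by rewrite mxE.
by apply/matrixP => i j; rewrite !ord1 h mxE.
Qed.

Definition Cm (J : 'M[RR]_6) (c : 'cV[RR]_6) : 'M[RR]_(6, 1 + 1) := row_mx c (J *m c).
Definition Wm J c : 'M[RR]_6 := kermx (Cm J c).
Definition inW J c (v : V) := (v <= Wm J c)%MS.

Lemma inWP J c v : inW J c v <-> v *m c = 0 /\ v *m J *m c = 0.
Proof.
rewrite /inW /Wm; split.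
  move/sub_kermxP; rewrite /Cm mul_mx_row => /eqP; rewrite row_mx_eq0 => /andP [/eqP h1 /eqP h2].
  by rewrite -mulmxA.
move=> [h1 h2]; apply/sub_kermxP; by rewrite /Cm mul_mx_row h1 mulmxA h2 row_mx0.
Qed.

Lemma indep_rows (J : 'M[RR]_6) : J *m J = - 1%:M ->
  forall (v : V) (a b : RR), v != 0 -> a *: v + b *: (v *m J) = 0 -> a = 0 /\ b = 0.
Proof.
move=> HJ; apply: (@indep2 _ (fun x => x *m J)).
- by move=> x y; rewrite mulmxDl.
- by move=> a x; rewrite scalemxAl.
- by move=> x; rewrite -mulmxA HJ mulmxN mulmx1.
Qed.

Lemma rankC J c : J *m J = - 1%:M -> c != 0 -> \rank (Cm J c) = 2.
Proof.
move=> HJ c0; rewrite -mxrank_tr; apply: rank_inj => r.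
have [a [b ->]] : exists a b, r = row_mx a%:M b%:M.
  by exists (lsubmx r 0 0), (rsubmx r 0 0); rewrite -!mx11_scalar hsubmxK.
rewrite /Cm tr_row_mx mul_row_col !mul_scalar_mx => h.
have c0' : c^T != 0 by apply: contraNneq c0 => h0; rewrite -[c]trmxK h0 linear0.
have hJ' : J^T *m J^T = - 1%:M by rewrite -trmx_mul HJ linearN /= trmx1.
have := indep_rows hJ' c0'; rewrite trmx_mul in h => /(_ a b h) [-> ->].
by rewrite !raddf0 row_mx0.
Qed.

Lemma rankW (J : 'M[RR]_6) (c : 'cV[RR]_6) : J *m J = - 1%:M -> c != 0 -> \rank (Wm J c) = 4.
Proof. by move=> HJ c0; rewrite /Wm mxrank_ker rankC. Qed.

Lemma existsw1 (J : 'M[RR]_6) (c : 'cV[RR]_6) : J *m J = - 1%:M -> c != 0 ->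
  exists w1 : V, (w1 *m c) 0 0 = 1 /\ (w1 *m J *m c) 0 0 = 0.
Proof.
move=> HJ c0.
have : row_full (Cm J c) by rewrite /row_full rankC.
case/row_fullP => B hB; exists (row 0 B).
have h : row 0 B *m Cm J c = delta_mx 0 0 by rewrite -row_mul hB row1.
split.
  have := congr1 (fun M : 'M[RR]_(1, 1 + 1) => M 0 (lshift 1 (0 : 'I_1))) h; rewrite /Cm mul_mx_row row_mxEl /= => ->.
  by rewrite mxE.
have := congr1 (fun M : 'M[RR]_(1, 1 + 1) => M 0 (rshift 1 (0 : 'I_1))) h; rewrite /Cm mul_mx_row row_mxEr /= mulmxA => ->.
by rewrite mxE.
Qed.

Lemma notin3 (J : 'M[RR]_6) (c : 'cV[RR]_6) (x y z : V) : J *m J = - 1%:M -> c != 0 ->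
  exists w, inW J c w /\ ~ (exists a b d, w = a *: x + b *: y + d *: z).
Proof.
move=> HJ c0; apply: NNPP => hno.
have hall : forall w, inW J c w -> exists a b d, w = a *: x + b *: y + d *: z.
  move=> w hw; apply: NNPP => hn; apply: hno; by exists w.
have hQ : (Wm J c <= col_mx x (col_mx y z))%MS.
  apply/row_subP => i; have [a [b [d ->]]] := hall _ (row_sub i (Wm J c)).
  by rewrite -mul3 submxMl.
have := mxrankS hQ; rewrite rankW // => h.
have := leq_trans h (rank_leq_row _); by [].
Qed.

Lemma inWJ (J : 'M[RR]_6) (c : 'cV[RR]_6) v : J *m J = - 1%:M -> inW J c v -> inW J c (v *m J).
Proof.
move=> HJ /inWP [h1 h2]; apply/inWP; split => //.
by rewrite -(mulmxA v) HJ mulmxN mulmx1 mulNmx h1 oppr0.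
Qed.

Lemma sumsq0 (a b : RR) : a * a + b * b = 0 -> a = 0 /\ b = 0.
Proof.
move=> h; move: h; rewrite -!expr2 => /eqP; rewrite paddr_eq0 ?sqr_ge0 // !sqrf_eq0.
by case/andP => /eqP -> /eqP ->.
Qed.

Lemma indep4 (J : 'M[RR]_6) (v w : V) : J *m J = - 1%:M -> v != 0 ->
  ~ (exists a b, w = a *: v + b *: (v *m J)) ->
  forall al be ga de : RR,
  al *: v + be *: (v *m J) + ga *: w + de *: (w *m J) = 0 ->
  [/\ al = 0, be = 0, ga = 0 & de = 0].
Proof.
move=> HJ v0 hw al be ga de e1.
have JJ : forall x : V, x *m J *m J = - x by move=> x; rewrite -mulmxA HJ mulmxN mulmx1.
have e2 : al *: (v *m J) + be *: (- v) + ga *: (w *m J) + de *: (- w) = 0.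
  have := congr1 (fun M => M *m J) e1; rewrite !mulmxDl -!scalemxAl !JJ mul0mx; by [].
have [s0 | sn0] := eqVneq (ga * ga + de * de) 0.
  have [g0 d0] := sumsq0 s0; subst ga de.
  move: e1; rewrite !scale0r !addr0 => e1.
  by have [-> ->] := indep_rows HJ v0 e1.
exfalso; apply: hw.
exists (- (ga * al + de * be) / (ga * ga + de * de)), (- (ga * be - de * al) / (ga * ga + de * de)).
move: e1 e2; move: (v *m J) (w *m J) => vJ wJ e1 e2.
apply/rowP => i.
have h1 := congr1 (fun M : V => M 0 i) e1; have h2 := congr1 (fun M : V => M 0 i) e2.
move: h1 h2; rewrite !mxE /= => h1 h2.
have h3 := congr1 (fun t => ga * t) h1; have h4 := congr1 (fun t => de * t) h2.
move: h3 h4 => /= h3 h4.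
have key : (ga * ga + de * de) * w 0 i
  = - (ga * al + de * be) * v 0 i - (ga * be - de * al) * vJ 0 i by lra.
apply: (mulfI sn0); rewrite key; field; exact: sn0.
Qed.

Lemma span4 (J : 'M[RR]_6) (c : 'cV[RR]_6) (z w : V) : J *m J = - 1%:M -> c != 0 -> z != 0 ->
  inW J c z -> inW J c w -> ~ (exists a b, w = a *: z + b *: (z *m J)) ->
  forall y, inW J c y -> exists al be ga de,
    y = al *: z + be *: (z *m J) + ga *: w + de *: (w *m J).
Proof.
move=> HJ c0 z0 hz hw hn y hy.
set Q := col_mx z (col_mx (z *m J) (col_mx w (w *m J))).
have rQ : \rank Q = 4.
  apply: rank_inj => r; have [a [b [d [e ->]]]] := split4 r.
  rewrite mul4 => h; have [-> -> -> ->] := indep4 HJ z0 hn h.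
  by rewrite !raddf0 !row_mx0.
have hQ : (Q <= Wm J c)%MS.
  have hzJ := inWJ HJ hz; have hwJ := inWJ HJ hw; rewrite /inW in hz hw hzJ hwJ.
  by rewrite !col_mx_sub hz hw hzJ hwJ.
have hWQ : (Wm J c <= Q)%MS.
  by have [_ <-] := mxrank_leqif_sup hQ; rewrite rQ rankW.
have := submx_trans hy hWQ; case/submxP => D ->.
have [a [b [d [e ->]]]] := split4 D; rewrite mul4.
by exists a, b, d, e.
Qed.


Definition inZ (br : V -> V -> V) (J : 'M[RR]_6) (c : 'cV[RR]_6) (v : V) :=
  inW J c v /\ forall y, inW J c y -> br y v = 0.

Lemma central2 br (J : 'M[RR]_6) (c : 'cV[RR]_6) :
  is_lie_bracket br -> nilpotent_bracket br -> is_complex_structure br J -> c != 0 ->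
  (forall x y, inW J c (br x y)) ->
  exists z, [/\ z != 0, inZ br J c z & inZ br J c (z *m J)].
Proof.
move=> H Hn [HJ Hint] c0 hbr.
have JJ : forall x : V, x *m J *m J = - x by move=> x; rewrite -mulmxA HJ mulmxN mulmx1.
have alt : forall x, br x x = 0 by case: H.
have [z [hzW hz0 hzc]] : exists z, [/\ inW J c z, z != 0 & forall x, br x z = 0].
  have := @engel br (inW J c) (fun v => v = 0) Hn H (fun x y _ => hbr x y) erefl.
  case.
    have [w [hw hn]] := notin3 0 0 0 HJ c0.
    exists w; split => // w0; apply: hn; exists 0, 0, 0; by rewrite w0 !scaler0 !addr0.
  by move=> w [h1 h2 h3]; exists w; split => //; apply/eqP.
set u := z *m J.
have huW : inW J c u by apply: inWJ.
have K : forall X, br (X *m J) u = br X u *m J.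
  move=> X; rewrite /u Hint !hzc mul0mx !add0r; by [].
have [w [hwW hwn]] : exists w, inW J c w /\ ~ (exists a b, w = a *: z + b *: u).
  have [w [hw hn]] := notin3 z u 0 HJ c0.
  exists w; split => // - [a [b hab]]; apply: hn; exists a, b, 0; by rewrite scaler0 addr0.
have sp := span4 HJ c0 hz0 hzW hwW hwn.
have ind := indep4 HJ hz0 hwn.
have bruwJ : br u (w *m J) = br u w *m J.
  by rewrite (brN H) K -mulNmx -(brN H).
have bruz : br u z = 0 by apply: hzc.
have [a [b [c' [d hX]]]] := sp _ (hbr u w).
(* rotation argument: c' = d = 0 *)
have hXJ : br u w *m J = a *: u - b *: z + c' *: (w *m J) - d *: w.
  rewrite hX !mulmxDl -!scalemxAl /u !JJ; apply/rowP => i; rewrite !mxE; ring.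
have rot : forall k, exists p q r s,
    iter_br br (nseq k u) w = p *: w + q *: (w *m J) + r *: z + s *: u
    /\ p * p + q * q = (c' * c' + d * d) ^+ k.
  elim=> [|k [p [q [r [s [IH hn]]]]]].
    exists 1, 0, 0, 0; split; last by rewrite expr0; ring.
    by rewrite /= scale1r !scale0r !addr0.
  exists (p * c' - q * d), (p * d + q * c'), (p * a - q * b), (p * b + q * a); split.
    rewrite /= IH !(brDr H) !(brZr H) bruwJ bruz alt hXJ hX.
    apply/rowP => i; rewrite !mxE; ring.
  by rewrite exprS -hn; ring.
case: (LN H Hn) => N _.
have [cd0 _] : c' * c' + d * d = 0 /\ True.
  have [p [q [r [s [hit hn]]]]] := rot (N.+1).
  case: Hn => N0 HN0.
  have [p' [q' [r' [s' [hit' hn']]]]] := rot N0.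
  rewrite HN0 ?size_nseq // in hit'.
  have e0 : r' *: z + s' *: u + p' *: w + q' *: (w *m J) = 0.
    apply/rowP => i; have := congr1 (fun M : V => M 0 i) hit'; rewrite !mxE => h; lra.
  have [_ _ hp hq] := ind _ _ _ _ e0; subst p' q'.
  by move/esym/eqP: hn'; rewrite mul0r add0r expf_eq0 => /andP [_ /eqP ->].
have [c'0 d0] := sumsq0 cd0; subst c' d.
have ab0 : a * a + b * b = 0.
  apply: NNPP => /eqP sn0.
  set w1 := (b / (a * a + b * b)) *: w + (a / (a * a + b * b)) *: (w *m J).
  have hw1 : br w1 u = - u.
    rewrite (brN H) /w1 !(brDr H) !(brZr H) bruwJ hXJ hX.
    apply/rowP => i; rewrite !mxE; by field; first exact: sn0.
  have it : forall k, iter_br br (nseq k w1) u = (-1) ^+ k *: u.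
    elim=> [|k IH]; first by rewrite /= expr0 scale1r.
    by rewrite /= IH (brZr H) hw1 exprS scalerN -scaleN1r scalerA mulrC.
  case: Hn => N0 HN0.
  have := it N0; rewrite HN0 ?size_nseq // => /esym /eqP.
  rewrite scaler_eq0 signr_eq0 /= => /eqP u0.
  have hzz : - z = 0 by rewrite -JJ -/u u0 mul0mx.
  by move/negP: hz0; apply; rewrite -oppr_eq0 hzz.
have [a0 b0] := sumsq0 ab0; subst a b.
have huw : br u w = 0 by rewrite hX !scale0r !addr0.
have huwJ : br u (w *m J) = 0 by rewrite bruwJ huw mul0mx.
exists z; split => //; split => // y hy.
have [al [be [ga [de ->]]]] := sp y hy.
have e1 : br z u = 0 by rewrite (brN H) bruz oppr0.
have e2 : br w u = 0 by rewrite (brN H) huw oppr0.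
have e3 : br (w *m J) u = 0 by rewrite K e2 mul0mx.
by rewrite !(brDl H) !(brZl H) -/u e1 alt e2 e3 !scaler0 !addr0.
Qed.



Definition lf (c : 'cV[RR]_6) (x : V) : RR := (x *m c) 0 0.
Lemma lfD c x y : lf c (x + y) = lf c x + lf c y.
Proof. by rewrite /lf mulmxDl mxE. Qed.
Lemma lfZ c (a : RR) x : lf c (a *: x) = a * lf c x.
Proof. by rewrite /lf -scalemxAl mxE. Qed.
Lemma lf0 c : lf c 0 = 0.
Proof. by rewrite /lf mul0mx mxE. Qed.
Lemma lfN c x : lf c (- x) = - lf c x.
Proof. by rewrite /lf mulNmx mxE. Qed.

Definition cf (E : 'M[RR]_6) (m : 'I_6) (x : V) : RR := (x *m E) 0 m.
Lemma cfD E m x y : cf E m (x + y) = cf E m x + cf E m y.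
Proof. by rewrite /cf mulmxDl mxE. Qed.
Lemma cfZ E m (a : RR) x : cf E m (a *: x) = a * cf E m x.
Proof. by rewrite /cf -scalemxAl mxE. Qed.
Lemma cf0 E m : cf E m 0 = 0.
Proof. by rewrite /cf mul0mx mxE. Qed.
Lemma cf_sum E m (I : Type) (r : seq I) (P : pred I) (F : I -> V) :
  cf E m (\sum_(i <- r | P i) F i) = \sum_(i <- r | P i) cf E m (F i).
Proof. apply: (big_morph (cf E m)); [exact: cfD | exact: cf0]. Qed.

Lemma expandB br (B E : 'M[RR]_6) (m : 'I_6) (X Y : V) :
  is_lie_bracket br -> E *m B = 1%:M ->
  (br X Y *m E) 0 m = \sum_(i < 6) \sum_(j < 6)
     (X *m E) 0 (inord i) * (Y *m E) 0 (inord j) * ((br (row (inord i) B) (row (inord j) B)) *m E) 0 m.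
Proof.
move=> H HEB.
have hX : X = (X *m E) *m B by rewrite -mulmxA HEB mulmx1.
have hY : Y = (Y *m E) *m B by rewrite -mulmxA HEB mulmx1.
rewrite -/(cf E m (br X Y)) {1}hX {1}hY !mulmx_sum_row (br_suml _ _ _ _ H) cf_sum.
apply: eq_bigr => i _; rewrite (brZl H) (br_sumr _ _ _ _ H) cfZ cf_sum big_distrr /=.
apply: eq_bigr => j _; rewrite (brZr H) cfZ /cf !inord_val; ring.
Qed.

Definition P15 : seq (nat * nat) := [:: (0,1); (0,2); (0,3); (0,4); (0,5); (1,2); (1,3); (1,4); (1,5); (2,3); (2,4); (2,5); (3,4); (3,5); (4,5)]%N.

Lemma expand15 (x y : nat -> RR) (G : nat -> nat -> RR) :
  (forall i, G i i = 0) -> (forall i j, G j i = - G i j) ->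
  - (\sum_(i < 6) \sum_(j < 6) x i * y j * G i j)
  = \sum_(p <- P15) (- G p.1 p.2) * (x p.1 * y p.2 - x p.2 * y p.1).
Proof.
move=> hd ha.
rewrite !big_ord_recl !big_ord0 /bump /= !big_cons big_nil /=.
rewrite !hd (ha 0 1) (ha 0 2) (ha 0 3) (ha 0 4) (ha 0 5) (ha 1 2) (ha 1 3) (ha 1 4) (ha 1 5) (ha 2 3) (ha 2 4) (ha 2 5) (ha 3 4) (ha 3 5) (ha 4 5).
ring.
Qed.

Lemma case3 (x y : nat -> RR) (G : nat -> nat -> RR) :
  (forall i, G i i = 0) -> (forall i j, G j i = - G i j) ->
  forall (z02 : G 0%N 2%N = 0) (z03 : G 0%N 3%N = 0) (z04 : G 0%N 4%N = 0) (z05 : G 0%N 5%N = 0) (z12 : G 1%N 2%N = 0) (z13 : G 1%N 3%N = 0) (z14 : G 1%N 4%N = 0) (z15 : G 1%N 5%N = 0) (z23 : G 2%N 3%N = 0) (z24 : G 2%N 4%N = 0) (z25 : G 2%N 5%N = 0) (z34 : G 3%N 4%N = 0) (z35 : G 3%N 5%N = 0) (z45 : G 4%N 5%N = 0),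
  - (\sum_(i < 6) \sum_(j < 6) x i * y j * G i j)
  = \sum_(p <- [:: (1,2)]%N) (- G p.1.-1 p.2.-1) * (x p.1.-1 * y p.2.-1 - y p.1.-1 * x p.2.-1).
Proof.
move=> hd ha z02 z03 z04 z05 z12 z13 z14 z15 z23 z24 z25 z34 z35 z45; rewrite expand15 // !big_cons !big_nil /=.
rewrite z02 z03 z04 z05 z12 z13 z14 z15 z23 z24 z25 z34 z35 z45.
ring.
Qed.

Lemma case4 (x y : nat -> RR) (G : nat -> nat -> RR) :
  (forall i, G i i = 0) -> (forall i j, G j i = - G i j) ->
  forall (z03 : G 0%N 3%N = 0) (z04 : G 0%N 4%N = 0) (z05 : G 0%N 5%N = 0) (z13 : G 1%N 3%N = 0) (z14 : G 1%N 4%N = 0) (z15 : G 1%N 5%N = 0) (z23 : G 2%N 3%N = 0) (z24 : G 2%N 4%N = 0) (z25 : G 2%N 5%N = 0) (z34 : G 3%N 4%N = 0) (z35 : G 3%N 5%N = 0) (z45 : G 4%N 5%N = 0),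
  - (\sum_(i < 6) \sum_(j < 6) x i * y j * G i j)
  = \sum_(p <- [:: (1,2); (1,3); (2,3)]%N) (- G p.1.-1 p.2.-1) * (x p.1.-1 * y p.2.-1 - y p.1.-1 * x p.2.-1).
Proof.
move=> hd ha z03 z04 z05 z13 z14 z15 z23 z24 z25 z34 z35 z45; rewrite expand15 // !big_cons !big_nil /=.
rewrite z03 z04 z05 z13 z14 z15 z23 z24 z25 z34 z35 z45.
ring.
Qed.

Lemma case5 (x y : nat -> RR) (G : nat -> nat -> RR) :
  (forall i, G i i = 0) -> (forall i j, G j i = - G i j) ->
  forall (z04 : G 0%N 4%N = 0) (z05 : G 0%N 5%N = 0) (z14 : G 1%N 4%N = 0) (z15 : G 1%N 5%N = 0) (z24 : G 2%N 4%N = 0) (z25 : G 2%N 5%N = 0) (z34 : G 3%N 4%N = 0) (z35 : G 3%N 5%N = 0) (z45 : G 4%N 5%N = 0),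
  - (\sum_(i < 6) \sum_(j < 6) x i * y j * G i j)
  = \sum_(p <- [:: (1,2); (1,3); (1,4); (2,3); (2,4); (3,4)]%N) (- G p.1.-1 p.2.-1) * (x p.1.-1 * y p.2.-1 - y p.1.-1 * x p.2.-1).
Proof.
move=> hd ha z04 z05 z14 z15 z24 z25 z34 z35 z45; rewrite expand15 // !big_cons !big_nil /=.
rewrite z04 z05 z14 z15 z24 z25 z34 z35 z45.
ring.
Qed.

Lemma case6 (x y : nat -> RR) (G : nat -> nat -> RR) :
  (forall i, G i i = 0) -> (forall i j, G j i = - G i j) ->
  forall (z05 : G 0%N 5%N = 0) (z15 : G 1%N 5%N = 0) (z25 : G 2%N 5%N = 0) (z35 : G 3%N 5%N = 0) (z45 : G 4%N 5%N = 0) (z24 : G 2%N 4%N = 0) (z34 : G 3%N 4%N = 0),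
  - (\sum_(i < 6) \sum_(j < 6) x i * y j * G i j)
  = \sum_(p <- [:: (1,2); (1,3); (1,4); (1,5); (2,3); (2,4); (2,5); (3,4)]%N) (- G p.1.-1 p.2.-1) * (x p.1.-1 * y p.2.-1 - y p.1.-1 * x p.2.-1).
Proof.
move=> hd ha z05 z15 z25 z35 z45 z24 z34; rewrite expand15 // !big_cons !big_nil /=.
rewrite z05 z15 z25 z35 z45 z24 z34.
ring.
Qed.


Definition Bm (s : seq V) : 'M[RR]_6 := \matrix_(i < 6) nth 0 s i.

Lemma rowB (s : seq V) n : (n < 6)%N -> row (inord n) (Bm s) = nth 0 s n.
Proof. by move=> hn; rewrite rowK inordK. Qed.

Lemma coordB (s : seq V) (E : 'M[RR]_6) : Bm s *m E = 1%:M ->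
  forall p m, (p < 6)%N -> (m < 6)%N -> ((nth 0 s p) *m E) 0 (inord m) = (p == m)%:R.
Proof.
move=> h p m hp hm; rewrite -(rowB s hp) -row_mul h row1 mxE /=.
by rewrite -val_eqE /= !inordK // eq_sym.
Qed.

Lemma sum6 (r : 'rV[RR]_6) (s : seq V) : r *m Bm s =
  r 0 (inord 0) *: nth 0 s 0 + (r 0 (inord 1) *: nth 0 s 1 + (r 0 (inord 2) *: nth 0 s 2 +
  (r 0 (inord 3) *: nth 0 s 3 + (r 0 (inord 4) *: nth 0 s 4 + (r 0 (inord 5) *: nth 0 s 5 + 0))))).
Proof.
rewrite mulmx_sum_row (eq_bigr (fun i : 'I_6 => r 0 (inord i) *: nth 0 s i)).
  by rewrite !big_ord_recl big_ord0 /bump /=.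
by move=> i _; rewrite inord_val rowK.
Qed.

Lemma row6 (r : 'rV[RR]_6) : r 0 (inord 0) = 0 -> r 0 (inord 1) = 0 -> r 0 (inord 2) = 0 ->
  r 0 (inord 3) = 0 -> r 0 (inord 4) = 0 -> r 0 (inord 5) = 0 -> r = 0.
Proof.
move=> h0 h1 h2 h3 h4 h5; apply/rowP => i; rewrite mxE.
case: i => [[|[|[|[|[|[|//]]]]]] Hi];
  [rewrite -h0 | rewrite -h1 | rewrite -h2 | rewrite -h3 | rewrite -h4 | rewrite -h5];
  congr (r 0 _); apply: val_inj; by rewrite /= inordK.
Qed.


Lemma construct br (J : 'M[RR]_6) :
  is_lie_bracket br -> nilpotent_bracket br -> is_complex_structure br J ->
  exists (c : 'cV[RR]_6) (v0 v2 v3 v4 v5 : V),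
  [/\ [/\ c != 0, forall x y, inW J c (br x y), lf c v0 = 1 & lf (J *m c) v0 = 0],
      [/\ inW J c v2, inW J c v3, inZ br J c v4 & inZ br J c v5],
      [/\ ~ (exists a b d, v2 = a *: v3 + b *: v4 + d *: v5),
          ~ (exists a b, v3 = a *: v4 + b *: v5),
          ~ (exists a, v4 = a *: v5) & v5 <> 0] &
      [/\ forall x, exists a b d, br x v2 = a *: v3 + b *: v4 + d *: v5,
          forall x, exists a b, br x v3 = a *: v4 + b *: v5,
          forall x, exists a, br x v4 = a *: v5 &
          forall x, br x v5 = 0]].
Proof.
move=> H Hn HC; have [HJ Hint] := HC.
have [c [c0 hc]] := exists_c H Hn HC.
have hbr : forall x y, inW J c (br x y) by move=> x y; apply/inWP; exact: hc x y.
have [z [z0 hzZ huZ]] := central2 H Hn HC c0 hbr.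
have Zst : forall x v, inZ br J c v -> inZ br J c (br x v).
  move=> x v [hvW hv]; split; first exact: hbr.
  move=> y hy; case: (H) => _ _ _ Jac; have := Jac y x v.
  rewrite (brN H v y) (hv _ hy) oppr0 (br0r H) addr0 (brN H v) (hv _ (hbr y x)) oppr0 addr0.
  by [].
have [v5 [h5Z h5n h5c]] := @engel br (inZ br J c) (fun v => v = 0) Hn H Zst erefl
  (ex_intro _ z (conj hzZ (elimN eqP z0))).
have ex4 : exists y, inZ br J c y /\ ~ (exists a, y = a *: v5).
  have [hz'|hz'] := classic (exists a, z = a *: v5); last by exists z.
  have [hu'|hu'] := classic (exists a, z *m J = a *: v5); last by exists (z *m J).
  exfalso; case: hz' => a ha; case: hu' => b hb.
  have e : b *: z + (- a) *: (z *m J) = 0.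
    by rewrite hb ha !scalerA -scalerDl mulNr (mulrC a b) subrr scale0r.
  have [b0 a0] := indep_rows HJ z0 e.
  by move/negP: z0; apply; rewrite ha -(opprK a) a0 oppr0 scale0r.
have [v4 [h4Z h4n h4c]] := @engel br (inZ br J c) (fun v => exists a, v = a *: v5) Hn H Zst
  (ex_intro _ 0 (esym (scale0r _))) ex4.
have ex3 : exists y, inW J c y /\ ~ (exists a b, y = a *: v4 + b *: v5).
  have [w [hw hn]] := notin3 v4 v5 0 HJ c0; exists w; split => // - [a [b hab]].
  by apply: hn; exists a, b, 0; rewrite scaler0 addr0.
have q3 : exists a b, (0 : V) = a *: v4 + b *: v5 by exists 0, 0; rewrite !scale0r addr0.
have [v3 [h3W h3n h3c]] := @engel br (inW J c) (fun v => exists a b, v = a *: v4 + b *: v5) Hn H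
  (fun x y _ => hbr x y) q3 ex3.
have ex2 : exists y, inW J c y /\ ~ (exists a b d, y = a *: v3 + b *: v4 + d *: v5).
  have [w [hw hn]] := notin3 v3 v4 v5 HJ c0; by exists w.
have q2 : exists a b d, (0 : V) = a *: v3 + b *: v4 + d *: v5.
  by exists 0, 0, 0; rewrite !scale0r !addr0.
have [v2 [h2W h2n h2c]] := @engel br (inW J c) (fun v => exists a b d, v = a *: v3 + b *: v4 + d *: v5) Hn H
  (fun x y _ => hbr x y) q2 ex2.
have [w1 [hw1c hw1Jc]] := existsw1 HJ c0.
exists c, w1, v2, v3, v4, v5.
have hJc : lf (J *m c) w1 = 0 by rewrite /lf mulmxA.
by split; split.
Qed.


Lemma lf_negc (c : 'cV[RR]_6) x : lf (- c) x = - lf c x.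
Proof. by rewrite /lf mulmxN mxE. Qed.

Unset Implicit Arguments.

Theorem corollary2p4 (br : V -> V -> V) (J : 'M[Rdefinitions.R]_6) :
  is_lie_bracket br -> nilpotent_bracket br -> is_complex_structure br J ->
  exists E : 'M[Rdefinitions.R]_6,
    [/\ E \in unitmx,
        is_10_form J (cform (ef E 1) (ef E 2)) &
        closed_cform br (cform (ef E 1) (ef E 2))] /\
    [/\ in_span2 E [:: (1,2)%N] (d1 br (ef E 3)),
        in_span2 E [:: (1,2); (1,3); (2,3)]%N (d1 br (ef E 4)),
        in_span2 E [:: (1,2); (1,3); (1,4); (2,3); (2,4); (3,4)]%N (d1 br (ef E 5)) &
        in_span2 E [:: (1,2); (1,3); (1,4); (1,5); (2,3); (2,4); (2,5); (3,4)]%N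
                 (d1 br (ef E 6))].
Proof.
move=> H Hn HC; have [HJ Hint] := HC.
have [c [v0 [v2 [v3 [v4 [v5 [[c0 hbr h0c h0J] [h2W h3W h4Z h5Z]
  [h2n h3n h4n h5n] [h2c h3c h4c h5c]]]]]]]] := construct H Hn HC.
have h4W := h4Z.1; have h5W := h5Z.1.
have alt : forall x, br x x = 0 by case: H.
have lfW : forall v, inW J c v -> lf c v = 0 /\ lf (J *m c) v = 0.
  move=> v /inWP [h1 h2]; split; first by rewrite /lf h1 mxE.
  by rewrite /lf mulmxA h2 mxE.
pose v1 := v0 *m J.
have h1c : lf c v1 = 0 by rewrite /lf /v1 -mulmxA.
have h1J : lf (J *m c) v1 = -1.
  have e : (v0 *m J) *m (J *m c) = (- v0) *m c.
    by rewrite mulmxA -(mulmxA v0 J J) HJ mulmxN mulmx1.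
  by rewrite /lf /v1 e -/(lf c (- v0)) lfN h0c.
pose s := [:: v0; v1; v2; v3; v4; v5].
pose B := Bm s.
have hBu : B \in unitmx.
  rewrite -row_free_unit /row_free; apply/eqP; apply: rank_inj => r hr.
  rewrite /B sum6 /= in hr.
  move: hr; set r0 := r 0 (inord 0); set r1 := r 0 (inord 1); set r2 := r 0 (inord 2);
    set r3 := r 0 (inord 3); set r4 := r 0 (inord 4); set r5 := r 0 (inord 5) => hr.
  have e0 := congr1 (lf c) hr; have e1 := congr1 (lf (J *m c)) hr.
  rewrite !lfD !lfZ !lf0 h0c h1c (lfW _ h2W).1 (lfW _ h3W).1 (lfW _ h4W).1 (lfW _ h5W).1 in e0.
  rewrite !lfD !lfZ !lf0 h0J h1J (lfW _ h2W).2 (lfW _ h3W).2 (lfW _ h4W).2 (lfW _ h5W).2 in e1.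
  have z0 : r0 = 0 by lra.
  have z1 : r1 = 0 by lra.
  rewrite z0 z1 !scale0r !add0r in hr.
  have z2 : r2 = 0.
    apply: NNPP => /eqP r2n; apply: h2n.
    exists (- r3 / r2), (- r4 / r2), (- r5 / r2); apply/rowP => i.
    have := congr1 (fun M : V => M 0 i) hr; rewrite !mxE => h.
    apply: (mulfI r2n).
    have key : r2 * v2 0 i = - (r3 * v3 0 i + r4 * v4 0 i + r5 * v5 0 i) by lra.
    by rewrite key; field.
  rewrite z2 scale0r add0r in hr.
  have z3 : r3 = 0.
    apply: NNPP => /eqP r3n; apply: h3n.
    exists (- r4 / r3), (- r5 / r3); apply/rowP => i.
    have := congr1 (fun M : V => M 0 i) hr; rewrite !mxE => h.
    apply: (mulfI r3n).
    have key : r3 * v3 0 i = - (r4 * v4 0 i + r5 * v5 0 i) by lra.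
    by rewrite key; field.
  rewrite z3 scale0r add0r in hr.
  have z4 : r4 = 0.
    apply: NNPP => /eqP r4n; apply: h4n.
    exists (- r5 / r4); apply/rowP => i.
    have := congr1 (fun M : V => M 0 i) hr; rewrite !mxE => h.
    apply: (mulfI r4n).
    have key : r4 * v4 0 i = - (r5 * v5 0 i) by lra.
    by rewrite key; field.
  rewrite z4 scale0r add0r addr0 in hr.
  have z5 : r5 = 0.
    move/eqP: hr; rewrite scaler_eq0 => /orP [/eqP // | /eqP h]; by exfalso; apply: h5n.
  by apply: row6.
pose E := invmx B.
have HEB : E *m B = 1%:M by rewrite /E mulVmx.
have HBE : B *m E = 1%:M by rewrite /E mulmxV.
have rowlf : forall (cc : 'cV[RR]_6) i, (B *m cc) i 0 = lf cc (row i B).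
  by move=> cc i; rewrite /lf -row_mul [RHS]mxE.
have colef : forall (cc : 'cV[RR]_6) (k : 'I_6) X, B *m cc = delta_mx k 0 -> (X *m E) 0 k = lf cc X.
  move=> cc k X hcc; by rewrite /lf -(mulKmx hBu cc) hcc -/E mulmxA -colE [RHS]mxE.
have ef1 : forall X, ef E 1 X = lf c X.
  move=> X; apply: colef; apply/colP => i; rewrite rowlf mxE /= -val_eqE /= inordK //.
  by case: i => [[|[|[|[|[|[|//]]]]]] Hi]; rewrite rowK /=;
    rewrite ?h0c ?h1c ?(lfW _ h2W).1 ?(lfW _ h3W).1 ?(lfW _ h4W).1 ?(lfW _ h5W).1.
have ef2 : forall X, ef E 2 X = - lf (J *m c) X.
  move=> X; rewrite -lf_negc; apply: colef; apply/colP => i; rewrite rowlf mxE /= -val_eqE /= inordK //.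
  by case: i => [[|[|[|[|[|[|//]]]]]] Hi]; rewrite rowK /= lf_negc;
    rewrite ?h0J ?h1J ?(lfW _ h2W).2 ?(lfW _ h3W).2 ?(lfW _ h4W).2 ?(lfW _ h5W).2 ?opprK ?oppr0.
exists E; split; first split.
- by rewrite /E unitmx_inv.
- move=> X; rewrite /cform !ef1 !ef2.
  have -> : lf c (X *m J) = lf (J *m c) X by rewrite /lf mulmxA.
  have -> : lf (J *m c) (X *m J) = - lf c X.
    by rewrite /lf mulmxA -(mulmxA X J J) HJ mulmxN mulmx1 -/(lf c (- X)) lfN.
  rewrite /GRing.mul /=; congr Complex; ring.
- move=> X Y; rewrite /cform ef1 ef2 (lfW _ (hbr X Y)).1 (lfW _ (hbr X Y)).2 oppr0.
  have e : Complex (0 : RR) 0 = 0 by []. by rewrite e oppr0.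
have cv : forall p m, (p < 6)%N -> (m < 6)%N -> cf E (inord m) (nth 0 s p) = (p == m)%:R.
  by move=> p m hp hm; apply: (coordB HBE).
have hco : forall x m, (m < 6)%N ->
   [/\ (m <= 2)%N -> cf E (inord m) (br x v2) = 0,
       (m <= 3)%N -> cf E (inord m) (br x v3) = 0,
       (m <= 4)%N -> cf E (inord m) (br x v4) = 0 &
       cf E (inord m) (br x v5) = 0].
  move=> x m hm; have c3 := cv 3 m erefl hm; have c4 := cv 4 m erefl hm; have c5 := cv 5 m erefl hm.
  simpl in c3, c4, c5; split.
  - move=> hm2; case: (h2c x) => a [b [d ->]]; rewrite !cfD !cfZ c3 c4 c5.
    by case: m hm hm2 {c3 c4 c5} => [|[|[|m]]] //= _ _; rewrite !mulr0 !addr0.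
  - move=> hm2; case: (h3c x) => a [b ->]; rewrite !cfD !cfZ c4 c5.
    by case: m hm hm2 {c3 c4 c5} => [|[|[|[|m]]]] //= _ _; rewrite !mulr0 !addr0.
  - move=> hm2; case: (h4c x) => a ->; rewrite !cfZ c5.
    by case: m hm hm2 {c3 c4 c5} => [|[|[|[|[|m]]]]] //= _ _; rewrite !mulr0.
  - by rewrite h5c cf0.
have hd : forall m i, cf E m (br (row (inord i) B) (row (inord i) B)) = 0.
  by move=> m i; rewrite alt cf0.
have ha : forall m i j, cf E m (br (row (inord j) B) (row (inord i) B))
                      = - cf E m (br (row (inord i) B) (row (inord j) B)).
  by move=> m i j; rewrite (brN H) /cf mulNmx mxE.
have rB : forall n, (n < 6)%N -> row (inord n) B = nth 0 s n by move=> n hn; apply: rowB.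
have Zc : forall a b m, (a < 6)%N -> (2 <= b)%N -> (b < 6)%N -> (m <= b)%N ->
    cf E (inord m) (br (row (inord a) B) (row (inord b) B)) = 0.
  move=> a b m ha' hb2 hb6 hmb; rewrite (rB b hb6).
  have hm6 : (m < 6)%N by apply: leq_ltn_trans hmb hb6.
  have [q2 q3 q4 q5] := hco (row (inord a) B) m hm6.
  by case: b hb2 hb6 hmb => [|[|[|[|[|[|b]]]]]].
split.
- exists (fun p => - cf E (inord 2) (br (row (inord p.1.-1) B) (row (inord p.2.-1) B))) => X Y.
  rewrite /d1 /ef /= (@expandB br B E _ X Y H HEB).
  rewrite /wedge; eapply (@case3 (fun n => (X *m E) 0 (inord n)) (fun n => (Y *m E) 0 (inord n)) (fun i j => cf E (inord 2) (br (row (inord i) B) (row (inord j) B)))).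
  + by move=> i; apply: hd.
  + by move=> i j; apply: ha.
  all: try (cbv beta; match goal with |- cf _ (inord ?m) _ = _ => match goal with |- cf _ _ (_ (row (inord ?a) _) _) = _ => match goal with |- cf _ _ (_ _ (row (inord ?b) _)) = _ => exact (Zc a b m erefl erefl erefl erefl) end end end).
- exists (fun p => - cf E (inord 3) (br (row (inord p.1.-1) B) (row (inord p.2.-1) B))) => X Y.
  rewrite /d1 /ef /= (@expandB br B E _ X Y H HEB).
  apply: (@case4 (fun n => (X *m E) 0 (inord n)) (fun n => (Y *m E) 0 (inord n)) (fun i j => cf E (inord 3) (br (row (inord i) B) (row (inord j) B)))).
  + by move=> i; apply: hd.
  + by move=> i j; apply: ha.
  all: try (cbv beta; match goal with |- cf _ (inord ?m) _ = _ => match goal with |- cf _ _ (_ (row (inord ?a) _) _) = _ => match goal with |- cf _ _ (_ _ (row (inord ?b) _)) = _ => exact (Zc a b m erefl erefl erefl erefl) end end end).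
- exists (fun p => - cf E (inord 4) (br (row (inord p.1.-1) B) (row (inord p.2.-1) B))) => X Y.
  rewrite /d1 /ef /= (@expandB br B E _ X Y H HEB).
  apply: (@case5 (fun n => (X *m E) 0 (inord n)) (fun n => (Y *m E) 0 (inord n)) (fun i j => cf E (inord 4) (br (row (inord i) B) (row (inord j) B)))).
  + by move=> i; apply: hd.
  + by move=> i j; apply: ha.
  all: try (cbv beta; match goal with |- cf _ (inord ?m) _ = _ => match goal with |- cf _ _ (_ (row (inord ?a) _) _) = _ => match goal with |- cf _ _ (_ _ (row (inord ?b) _)) = _ => exact (Zc a b m erefl erefl erefl erefl) end end end).
- exists (fun p => - cf E (inord 5) (br (row (inord p.1.-1) B) (row (inord p.2.-1) B))) => X Y.
  rewrite /d1 /ef /= (@expandB br B E _ X Y H HEB).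
  have z24 : cf E (inord 5) (br (row (inord 2) B) (row (inord 4) B)) = 0.
    by rewrite (rB 2) // (rB 4) //= (h4Z.2 _ h2W) cf0.
  have z34 : cf E (inord 5) (br (row (inord 3) B) (row (inord 4) B)) = 0.
    by rewrite (rB 3) // (rB 4) //= (h4Z.2 _ h3W) cf0.
  apply: (@case6 (fun n => (X *m E) 0 (inord n)) (fun n => (Y *m E) 0 (inord n)) (fun i j => cf E (inord 5) (br (row (inord i) B) (row (inord j) B)))).
  + by move=> i; apply: hd.
  + by move=> i j; apply: ha.
  all: try (cbv beta; match goal with |- cf _ (inord ?m) _ = _ => match goal with |- cf _ _ (_ (row (inord ?a) _) _) = _ => match goal with |- cf _ _ (_ _ (row (inord ?b) _)) = _ => exact (Zc a b m erefl erefl erefl erefl) end end end).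
  all: [> exact z24 | exact z34].
Qed.
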